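(* Let $(G,X,\Gamma)$ be a $(\mu,\nu)$-path system group, let $\eta\ge0$ and let $(g,A)$ be an $\eta$-quasi-convex element of $G$. There exists $\theta=\theta(\eta,g,A)\ge1$ such that for every $a\in A$ the orbit map $\mathbb Z\to X$, $m\mapsto g^ma$, is a $(\theta,0)$-quasi-isometric embedding, i.e. $\frac1\theta|m-n|\le d(g^ma,g^na)\le\theta|m-n|$ for all $m,n\in\mathbb Z$. Moreover $[g]^\infty>0$.
   Context: A path is a rectifiable continuous map $\alpha\colon[a,b]\to X$ parametrised by arc length; it is a $(\kappa,\lambda)$-quasi-geodesic if $d(\alpha(t),\alpha(t'))\le|t-t'|\le\kappa d(\alpha(t),\alpha(t'))+\lambda$. A $(\mu,\nu)$-path system group $(G,X,\Gamma)$ is a group $G$ acting properly by isometries on a geodesic metric space $X$ together with a $G$-invariant collection $\Gamma$ of paths closed under subpaths, such that any two points are joined by an element of $\Gamma$ and every element is a $(\mu,\nu)$-quasi-geodesic. A subset $Y$ is $\eta$-quasi-convex if every $\gamma\in\Gamma$ with endpoints in $Y$ lies in the closed $\eta$-neighbourhood of $Y$. An element $g$ is $\eta$-quasi-convex, written $(g,A)$, if $g$ has infinite order and $A\subseteq X$ is a $\langle g\rangle$-invariant $\eta$-quasi-convex subset on which $\langle g\rangle$ acts $\eta$-coboundedly (for all $a,a'\in A$ some $k\in\langle g\rangle$ has $d(a,ka')\le\eta$). The asymptotic translation length is $[g]^\infty=\limsup_{m\to\infty}\frac1m d(o,g^mo)$ for any $o\in X$. *)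

(* Defs.v *)
From Stdlib Require Import Reals Lra List ZArith Sorting.Sorted.
From Coquelicot Require Import Coquelicot.
Open Scope R_scope.

Record is_group {G : Type} (mul : G -> G -> G) (inv : G -> G) (one : G) : Prop := {
  g_assoc : forall x y z, mul x (mul y z) = mul (mul x y) z;
  g_idl : forall x, mul one x = x;
  g_idr : forall x, mul x one = x;
  g_invl : forall x, mul (inv x) x = one;
  g_invr : forall x, mul x (inv x) = one }.

Definition npow {G : Type} (mul : G -> G -> G) (one : G) (g : G) (n : nat) : G :=
  Nat.iter n (mul g) one.

Definition zpow {G : Type} (mul : G -> G -> G) (inv : G -> G) (one : G) (g : G) (k : Z) : G :=
  match k with
  | Z0 => one
  | Zpos p => npow mul one g (Pos.to_nat p)
  | Zneg p => inv (npow mul one g (Pos.to_nat p))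
  end.

Record is_metric {X : Type} (d : X -> X -> R) : Prop := {
  d_nonneg : forall x y, 0 <= d x y;
  d_sep : forall x y, d x y = 0 <-> x = y;
  d_sym : forall x y, d x y = d y x;
  d_tri : forall x y z, d x z <= d x y + d y z }.

Definition is_geodesic_space {X : Type} (d : X -> X -> R) : Prop :=
  forall x y, exists c : R -> X, c 0 = x /\ c (d x y) = y /\
    forall s t, 0 <= s <= d x y -> 0 <= t <= d x y -> d (c s) (c t) = Rabs (s - t).

Record is_isometric_action {G X : Type} (mul : G -> G -> G) (one : G)
    (act : G -> X -> X) (d : X -> X -> R) : Prop := {
  act_one : forall x, act one x = x;
  act_mul : forall g h x, act (mul g h) x = act g (act h x);
  act_isom : forall g x y, d (act g x) (act g y) = d x y }.

Definition is_proper_action {G X : Type} (act : G -> X -> X) (d : X -> X -> R) : Prop :=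
  forall x r, exists l : list G, forall g,
    (exists y, d x y <= r /\ d x (act g y) <= r) -> In g l.

Record path (X : Type) := mkPath { p_a : R; p_b : R; p_f : R -> X }.
Arguments mkPath {X}. Arguments p_a {X}. Arguments p_b {X}. Arguments p_f {X}.

Fixpoint chain_len {X : Type} (d : X -> X -> R) (f : R -> X) (l : list R) : R :=
  match l with
  | x :: ((y :: _) as l') => d (f x) (f y) + chain_len d f l'
  | _ => 0
  end.

Definition partition_sums {X : Type} (d : X -> X -> R) (f : R -> X) (s t : R) : R -> Prop :=
  fun v => exists pts : list R, Sorted Rle (s :: pts ++ t :: nil) /\
                                v = chain_len d f (s :: pts ++ t :: nil).

Definition continuous_on_seg {X : Type} (d : X -> X -> R) (f : R -> X) (a b : R) : Prop :=
  forall t, a <= t <= b -> forall eps, 0 < eps -> exists del, 0 < del /\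
    forall t', a <= t' <= b -> Rabs (t' - t) < del -> d (f t) (f t') < eps.

Definition arc_length_param {X : Type} (d : X -> X -> R) (f : R -> X) (a b : R) : Prop :=
  forall s t, a <= s -> s <= t -> t <= b -> is_lub (partition_sums d f s t) (t - s).

Definition is_path {X : Type} (d : X -> X -> R) (p : path X) : Prop :=
  p_a p <= p_b p /\ continuous_on_seg d (p_f p) (p_a p) (p_b p) /\
  arc_length_param d (p_f p) (p_a p) (p_b p).

Definition quasi_geodesic {X : Type} (d : X -> X -> R) (kappa lambda : R) (p : path X) : Prop :=
  forall t t', p_a p <= t <= p_b p -> p_a p <= t' <= p_b p ->
    d (p_f p t) (p_f p t') <= Rabs (t - t') /\
    Rabs (t - t') <= kappa * d (p_f p t) (p_f p t') + lambda.

Record is_path_system {G X : Type} (act : G -> X -> X) (d : X -> X -> R)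
    (Gam : path X -> Prop) (mu nu : R) : Prop := {
  ps_path : forall p, Gam p -> is_path d p;
  ps_inv : forall g p, Gam p -> Gam (mkPath (p_a p) (p_b p) (fun t => act g (p_f p t)));
  ps_sub : forall p a' b', Gam p -> p_a p <= a' -> a' <= b' -> b' <= p_b p ->
             Gam (mkPath a' b' (p_f p));
  ps_conn : forall x y, exists p, Gam p /\ p_f p (p_a p) = x /\ p_f p (p_b p) = y;
  ps_qg : forall p, Gam p -> quasi_geodesic d mu nu p }.

Definition path_system_group {G X : Type} (mul : G -> G -> G) (inv : G -> G) (one : G)
    (act : G -> X -> X) (d : X -> X -> R) (Gam : path X -> Prop) (mu nu : R) : Prop :=
  is_group mul inv one /\ is_metric d /\ is_geodesic_space d /\
  is_isometric_action mul one act d /\ is_proper_action act d /\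
  is_path_system act d Gam mu nu.

(* x lies in the closed eta-neighbourhood of Y, i.e. dist(x,Y) <= eta *)
Definition in_closed_nbhd {X : Type} (d : X -> X -> R) (Y : X -> Prop) (eta : R) (x : X) : Prop :=
  forall eps, 0 < eps -> exists y, Y y /\ d x y <= eta + eps.

Definition quasi_convex_set {X : Type} (d : X -> X -> R) (Gam : path X -> Prop)
    (eta : R) (Y : X -> Prop) : Prop :=
  forall p, Gam p -> Y (p_f p (p_a p)) -> Y (p_f p (p_b p)) ->
    forall t, p_a p <= t <= p_b p -> in_closed_nbhd d Y eta (p_f p t).

Definition quasi_convex_element {G X : Type} (mul : G -> G -> G) (inv : G -> G) (one : G)
    (act : G -> X -> X) (d : X -> X -> R) (Gam : path X -> Prop) (eta : R)
    (g : G) (A : X -> Prop) : Prop :=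
  (forall n : nat, (0 < n)%nat -> npow mul one g n <> one) /\
  (exists a, A a) /\
  (forall (k : Z) a, A a -> A (act (zpow mul inv one g k) a)) /\
  quasi_convex_set d Gam eta A /\
  (forall a a', A a -> A a' -> exists k : Z, d a (act (zpow mul inv one g k) a') <= eta).

Definition asym_transl {G X : Type} (mul : G -> G -> G) (one : G)
    (act : G -> X -> X) (d : X -> X -> R) (g : G) (o : X) : Rbar :=
  LimSup_seq (fun m => d o (act (npow mul one g m) o) / INR m).

(* Main.v *)
Require Import Defs.
From Stdlib Require Import Reals ZArith Lia Lra List Classical.
From Coquelicot Require Import Coquelicot.
Open Scope R_scope.

Section Grp.
Variables (G : Type) (mul : G -> G -> G) (inv : G -> G) (one : G).
Hypothesis HG : is_group mul inv one.
Variable g : G.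

Notation zp := (zpow mul inv one g).
Notation np := (npow mul one g).

Lemma inv_mul x y : inv (mul x y) = mul (inv y) (inv x).
Proof.
  destruct HG as [As Il Ir Vl Vr].
  assert (H : mul (mul x y) (mul (inv y) (inv x)) = one).
  { rewrite <- As. rewrite (As y). rewrite Vr, Il. apply Vr. }
  transitivity (mul (inv (mul x y)) (mul (mul x y) (mul (inv y) (inv x)))).
  - rewrite H, Ir; reflexivity.
  - rewrite As, Vl, Il; reflexivity.
Qed.

Lemma inv_one : inv one = one.
Proof. destruct HG as [As Il Ir Vl Vr]. rewrite <- (Vl one) at 2. now rewrite Ir. Qed.

Lemma np_add m n : np (m + n) = mul (np m) (np n).
Proof.
  destruct HG as [As Il Ir Vl Vr].
  induction m; simpl. now rewrite Il.
  change (mul g (np (m + n)) = mul (mul g (np m)) (np n)).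
  rewrite IHm, As; reflexivity.
Qed.

Lemma np_Sr n : np (S n) = mul (np n) g.
Proof.
  replace (S n) with (n + 1)%nat by lia. rewrite np_add.
  destruct HG as [As Il Ir Vl Vr]. simpl. now rewrite Ir.
Qed.

Lemma zp_nat n : zp (Z.of_nat n) = np n.
Proof.
  destruct n. reflexivity. simpl. now rewrite SuccNat2Pos.id_succ.
Qed.

Lemma zp_negnat n : zp (- Z.of_nat n) = inv (np n).
Proof.
  destruct n. simpl. now rewrite inv_one. simpl. now rewrite SuccNat2Pos.id_succ.
Qed.

Lemma zp_succ k : zp (Z.succ k) = mul g (zp k).
Proof.
  destruct HG as [As Il Ir Vl Vr].
  destruct k as [|p|p].
  - simpl. reflexivity.
  - replace (Z.succ (Zpos p)) with (Z.of_nat (S (Pos.to_nat p))) by lia.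
    rewrite zp_nat. simpl. reflexivity.
  - destruct (Nat.eq_dec (Pos.to_nat p) 0) as [E|E]; [lia|].
    destruct (Pos.to_nat p) as [|n] eqn:En; [lia|].
    assert (Zneg p = - Z.of_nat (S n))%Z by lia.
    assert (Z.succ (Zneg p) = - Z.of_nat n)%Z by lia.
    rewrite H0, H, !zp_negnat, np_Sr, inv_mul, As, Vr, Il. reflexivity.
Qed.

Lemma zp_pred k : zp (Z.pred k) = mul (inv g) (zp k).
Proof.
  destruct HG as [As Il Ir Vl Vr].
  rewrite <- (Z.succ_pred k) at 2. rewrite zp_succ, As, Vl, Il. reflexivity.
Qed.

Lemma zp_add i j : zp (i + j) = mul (zp i) (zp j).
Proof.
  destruct HG as [As Il Ir Vl Vr].
  induction i using Z.peano_ind.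
  - simpl. now rewrite Il.
  - rewrite Z.add_succ_l, !zp_succ, IHi, As. reflexivity.
  - rewrite Z.add_pred_l, !zp_pred, IHi, As. reflexivity.
Qed.

Hypothesis Hinf : forall n : nat, (0 < n)%nat -> np n <> one.

Lemma zp_one k : zp k = one -> k = 0%Z.
Proof.
  destruct HG as [As Il Ir Vl Vr].
  intros H. destruct k as [|p|p]; auto; exfalso; simpl in H.
  - apply (Hinf (Pos.to_nat p)); auto; lia.
  - apply (Hinf (Pos.to_nat p)); [lia|].
    transitivity (mul (np (Pos.to_nat p)) (inv (np (Pos.to_nat p)))).
    + now rewrite H, Ir.
    + apply Vr.
Qed.

Lemma zp_inj i j : zp i = zp j -> i = j.
Proof.
  destruct HG as [As Il Ir Vl Vr].
  intros H.
  assert (E : zp i = mul (zp (i - j)) (zp i)).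
  { rewrite H at 2. rewrite <- zp_add. f_equal. lia. }
  assert (zp (i - j) = one).
  { transitivity (mul (mul (zp (i-j)) (zp i)) (inv (zp i))).
    - now rewrite <- As, Vr, Ir.
    - now rewrite <- E, Vr. }
  apply zp_one in H0. lia.
Qed.

End Grp.
Section Main.
Variables (G X : Type) (mul : G -> G -> G) (inv : G -> G) (one : G)
    (act : G -> X -> X) (d : X -> X -> R) (Gam : path X -> Prop)
    (mu nu eta : R) (g : G) (A : X -> Prop).
Hypothesis HPS : path_system_group mul inv one act d Gam mu nu.
Hypothesis Heta : 0 <= eta.
Hypothesis HQ : quasi_convex_element mul inv one act d Gam eta g A.

Notation zp := (zpow mul inv one g).

Let HG : is_group mul inv one := proj1 HPS.
Let HM : is_metric d := proj1 (proj2 HPS).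
Let HA : is_isometric_action mul one act d := proj1 (proj2 (proj2 (proj2 HPS))).
Let HP : is_proper_action act d := proj1 (proj2 (proj2 (proj2 (proj2 HPS)))).
Let HS : is_path_system act d Gam mu nu := proj2 (proj2 (proj2 (proj2 (proj2 HPS)))).

Lemma actzp i j x : act (zp i) (act (zp j) x) = act (zp (i + j)) x.
Proof. rewrite zp_add by exact HG. now rewrite (act_mul _ _ _ _ HA). Qed.

Lemma act0 x : act (zp 0) x = x.
Proof. simpl. apply (act_one _ _ _ _ HA). Qed.

Lemma dshift m n a : d (act (zp m) a) (act (zp n) a) = d a (act (zp (n - m)) a).
Proof.
  replace (act (zp n) a) with (act (zp m) (act (zp (n - m)) a)).
  - apply (act_isom _ _ _ _ HA).
  - rewrite actzp. f_equal. f_equal. lia.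
Qed.

Lemma dcomm k j a : d (act (zp k) a) (act (zp j) (act (zp k) a)) = d a (act (zp j) a).
Proof.
  rewrite actzp, dshift. f_equal. f_equal. f_equal. lia.
Qed.

Lemma dtri x y z : d x z <= d x y + d y z.
Proof. apply (d_tri _ HM). Qed.
Lemma dsym x y : d x y = d y x.
Proof. apply (d_sym _ HM). Qed.
Lemma dpos x y : 0 <= d x y.
Proof. apply (d_nonneg _ HM). Qed.
Lemma dxx x : d x x = 0.
Proof. apply (d_sep _ HM). reflexivity. Qed.

Lemma list_bound (l : list G) : exists K, (0 <= K)%Z /\ forall j, In (zp j) l -> (Z.abs j <= K)%Z.
Proof.
  induction l as [|x l IH].
  - exists 0%Z. split. lia. intros j [].
  - destruct IH as [K [HK IH]].
    destruct (classic (exists j, zp j = x)) as [[j0 Hj0]|Hn].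
    + exists (Z.max K (Z.abs j0)). split. lia. intros j [H|H].
      * assert (j = j0). { apply (zp_inj _ _ _ _ HG g (proj1 HQ)). congruence. } subst. lia.
      * specialize (IH j H). lia.
    + exists K. split. auto. intros j [H|H]. exfalso; eauto. auto.
Qed.

Lemma bounded_return D : 0 <= D -> exists K, (0 <= K)%Z /\
  forall a, A a -> forall j, d a (act (zp j) a) <= D -> (Z.abs j <= K)%Z.
Proof.
  intros HD.
  destruct HQ as [Hinf [[a0 Ha0] [Hinv [Hqc Hcob]]]].
  destruct (HP a0 (eta + D)) as [l Hl].
  destruct (list_bound l) as [K [HK HKl]].
  exists K. split. auto. intros a Ha j Hj. apply HKl. apply Hl.
  destruct (Hcob a0 a Ha0 Ha) as [k Hk].
  exists (act (zp k) a). split. lra.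
  eapply Rle_trans. apply (dtri _ (act (zp k) a)). rewrite dcomm. lra.
Qed.

Lemma iter_bound a N (n : nat) :
  d a (act (zp (Z.of_nat n * N)) a) <= INR n * d a (act (zp N) a).
Proof.
  induction n.
  - simpl. rewrite act0, dxx. lra.
  - rewrite Nat2Z.inj_succ, Z.mul_succ_l, S_INR.
    eapply Rle_trans. apply (dtri _ (act (zp (Z.of_nat n * N)) a)).
    rewrite dshift. replace (Z.of_nat n * N + N - Z.of_nat n * N)%Z with N by lia. lra.
Qed.

Lemma delta0 : exists del, 0 < del /\ forall a, A a -> forall N, N <> 0%Z ->
  del <= d a (act (zp N) a).
Proof.
  destruct (bounded_return 1) as [K [HK HB]]. lra.
  exists (/ (IZR K + 1)).
  assert (HK' : 0 <= IZR K) by (apply IZR_le; lia).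
  split. apply Rinv_0_lt_compat. lra.
  intros a Ha N HN. apply Rnot_lt_le. intros Hlt.
  set (m := Z.to_nat (K + 1)).
  assert (Hm : INR m = IZR K + 1).
  { unfold m. rewrite INR_IZR_INZ, Z2Nat.id by lia. rewrite plus_IZR. reflexivity. }
  assert (H1 : d a (act (zp (Z.of_nat m * N)) a) <= 1).
  { eapply Rle_trans. apply iter_bound. rewrite Hm.
    apply Rmult_lt_compat_l with (r := IZR K + 1) in Hlt; [|lra].
    rewrite Rinv_r in Hlt by lra. lra. }
  apply HB in H1; auto.
  assert (Z.of_nat m = K + 1)%Z by (unfold m; lia).
  rewrite H in H1. rewrite Z.abs_mul in H1. nia.
Qed.


Lemma dabs a j : d a (act (zp j) a) = d a (act (zp (Z.abs j)) a).
Proof.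
  destruct (Z.abs_eq_or_opp j) as [E|E]; rewrite E; auto.
  pose proof (dshift (- j) 0 a) as H1. rewrite act0 in H1.
  rewrite (dsym a (act (zp (- j)) a)), H1. f_equal. f_equal. f_equal. lia.
Qed.

Lemma upper : exists C, 0 <= C /\ forall a, A a -> forall j,
  d a (act (zp j) a) <= IZR (Z.abs j) * C.
Proof.
  destruct HQ as [Hinf [[a0 Ha0] [Hinv [Hqc Hcob]]]].
  exists (2 * eta + d a0 (act (zp 1) a0)). split. pose proof (dpos a0 (act (zp 1) a0)). lra.
  intros a Ha j. rewrite dabs.
  replace (act (zp (Z.abs j)) a) with (act (zp (Z.of_nat (Z.abs_nat j) * 1)) a)
    by (f_equal; f_equal; lia).
  eapply Rle_trans. apply iter_bound. rewrite INR_IZR_INZ.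
  replace (Z.of_nat (Z.abs_nat j)) with (Z.abs j) by lia.
  apply Rmult_le_compat_l. apply IZR_le; lia.
  destruct (Hcob a a0 Ha Ha0) as [k Hk].
  eapply Rle_trans. apply (dtri _ (act (zp k) a0)).
  eapply Rle_trans. apply Rplus_le_compat_l. apply (dtri _ (act (zp 1) (act (zp k) a0))).
  rewrite dcomm. rewrite (act_isom _ _ _ _ HA), (dsym (act (zp k) a0) a). lra.
Qed.

Lemma near_orbit a N (p : path X) : A a -> Gam p -> p_f p (p_a p) = a ->
  p_f p (p_b p) = act (zp N) a -> forall t, p_a p <= t <= p_b p ->
  exists k, d (p_f p t) (act (zp k) a) <= 2 * eta + 1.
Proof.
  intros Ha Hp Hpa Hpb t Ht.
  destruct HQ as [Hinf [[a0 Ha0] [Hinv [Hqc Hcob]]]].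
  destruct (Hqc p Hp ltac:(rewrite Hpa; auto) ltac:(rewrite Hpb; auto) t Ht 1 ltac:(lra))
    as [y [Hy Hyd]].
  destruct (Hcob y a Hy Ha) as [k Hk]. exists k.
  eapply Rle_trans. apply (dtri _ y). lra.
Qed.

Lemma path_bound : exists K, 1 <= K /\ forall a, A a -> forall N,
  IZR (Z.abs N) <= K * (Rmax mu 1 * d a (act (zp N) a) + Rabs nu + 2).
Proof.
  destruct (bounded_return (4 * eta + 3)) as [K [HK HB]]. lra.
  assert (HK' : 0 <= IZR K) by (apply IZR_le; lia).
  exists (IZR K + 1). split. lra.
  intros a Ha N.
  destruct (ps_conn _ _ _ _ _ HS a (act (zp N) a)) as [p [Hp [Hpa Hpb]]].
  destruct (ps_path _ _ _ _ _ HS p Hp) as [Hab _].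
  pose proof (ps_qg _ _ _ _ _ HS p Hp) as Hqg.
  set (s := fun i : nat => Rmin (p_a p + INR i) (p_b p)).
  assert (Hs : forall i, p_a p <= s i <= p_b p).
  { intros i. unfold s, Rmin. pose proof (pos_INR i). destruct Rle_dec; lra. }
  assert (Hss : forall i, Rabs (s i - s (S i)) <= 1).
  { intros i. unfold s, Rmin. rewrite S_INR. pose proof (pos_INR i).
    destruct Rle_dec; destruct Rle_dec; unfold Rabs; destruct Rcase_abs; lra. }
  assert (Hclaim : forall i, exists k, (Z.abs k <= Z.of_nat i * K)%Z /\
     d (p_f p (s i)) (act (zp k) a) <= 2 * eta + 1).
  { induction i.
    - exists 0%Z. split. lia. unfold s. simpl. rewrite Rplus_0_r, Rmin_left by lra.
      rewrite Hpa, act0, dxx. lra.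
    - destruct IHi as [k [Hk1 Hk2]].
      destruct (near_orbit a N p Ha Hp Hpa Hpb (s (S i)) (Hs (S i))) as [k' Hk'].
      exists k'. split; auto.
      assert (d a (act (zp (k' - k)) a) <= 4 * eta + 3).
      { rewrite <- dshift.
        eapply Rle_trans. apply (dtri _ (p_f p (s i))). rewrite dsym.
        eapply Rle_trans. apply Rplus_le_compat_l. apply (dtri _ (p_f p (s (S i)))).
        destruct (Hqg (s i) (s (S i)) (Hs i) (Hs (S i))) as [Hq _].
        pose proof (Hss i). lra. }
      apply HB in H; auto. lia. }
  set (L := p_b p - p_a p).
  destruct (archimed L) as [Hu1 Hu2].
  set (n := Z.to_nat (up L)).
  assert (Hup : (0 < up L)%Z). { apply lt_IZR. unfold L in *. lra. }
  assert (Hn : INR n = IZR (up L)). { unfold n. rewrite INR_IZR_INZ, Z2Nat.id by lia. reflexivity. }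
  assert (Hsn : s n = p_b p). { unfold s. rewrite Rmin_right; auto. unfold L in *. lra. }
  destruct (Hclaim n) as [k [Hk1 Hk2]]. rewrite Hsn, Hpb in Hk2.
  assert (HNk : (Z.abs (N - k) <= K)%Z).
  { apply (HB a); auto. rewrite <- (dshift k N a), dsym. lra. }
  assert (HZ : (Z.abs N <= (Z.of_nat n + 1) * K)%Z) by lia.
  apply IZR_le in HZ. rewrite mult_IZR, plus_IZR, <- INR_IZR_INZ, Hn in HZ.
  destruct (Hqg (p_a p) (p_b p)) as [_ Hq2]; try lra.
  rewrite Hpa, Hpb in Hq2. rewrite Rabs_minus_sym, Rabs_right in Hq2 by lra.
  pose proof (dpos a (act (zp N) a)) as Hd.
  assert (mu * d a (act (zp N) a) <= Rmax mu 1 * d a (act (zp N) a)).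
  { apply Rmult_le_compat_r; auto. apply Rmax_l. }
  pose proof (Rle_abs nu).
  assert (IZR (up L) + 1 <= Rmax mu 1 * d a (act (zp N) a) + Rabs nu + 2) by (unfold L in *; lra).
  assert (1 <= Rmax mu 1) by apply Rmax_r.
  nra.
Qed.


Lemma lower : exists c, 0 < c /\ forall a, A a -> forall N,
  c * IZR (Z.abs N) <= d a (act (zp N) a).
Proof.
  destruct path_bound as [K [HK HPB]].
  destruct delta0 as [del [Hdel HD]].
  set (mu' := Rmax mu 1). set (nu' := Rabs nu).
  assert (Hmu : 1 <= mu') by apply Rmax_r.
  assert (Hnu : 0 <= nu') by apply Rabs_pos.
  set (N0 := 2 * K * (nu' + 2)).
  assert (HN0 : 0 < N0) by (unfold N0; nra).
  set (c1 := / (2 * K * mu')). set (c2 := del / N0).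
  assert (Hc1 : 0 < c1) by (unfold c1; apply Rinv_0_lt_compat; nra).
  assert (Hc2 : 0 < c2) by (unfold c2; unfold Rdiv; apply Rmult_lt_0_compat; auto; apply Rinv_0_lt_compat; auto).
  exists (Rmin c1 c2). split. now apply Rmin_glb_lt.
  intros a Ha N.
  pose proof (dpos a (act (zp N) a)) as Hd0.
  destruct (Z.eq_dec N 0) as [->|HN].
  { change (IZR (Z.abs 0)) with 0. rewrite Rmult_0_r. exact Hd0. }
  set (x := IZR (Z.abs N)). set (D := d a (act (zp N) a)).
  assert (Hx : 1 <= x) by (unfold x; apply IZR_le; lia).
  destruct (Rle_lt_dec N0 x) as [Hb|Hs].
  - eapply Rle_trans. apply Rmult_le_compat_r. lra. apply Rmin_l.
    specialize (HPB a Ha N). fold mu' nu' x D in HPB.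
    assert (H2 : x <= 2 * K * mu' * D) by (unfold N0 in Hb; nra).
    apply Rle_trans with (c1 * (2 * K * mu' * D)).
    + apply Rmult_le_compat_l; lra.
    + unfold c1. rewrite <- Rmult_assoc, Rinv_l by nra. lra.
  - eapply Rle_trans. apply Rmult_le_compat_r. lra. apply Rmin_r.
    specialize (HD a Ha N HN). fold D in HD.
    apply Rle_trans with (c2 * N0).
    + apply Rmult_le_compat_l; lra.
    + unfold c2, Rdiv. rewrite Rmult_assoc, Rinv_l by lra. lra.
Qed.

Lemma conclusion :
  (exists theta : R, 1 <= theta /\
     forall a, A a -> forall m n : Z,
       / theta * Rabs (IZR (m - n)) <=
         d (act (zpow mul inv one g m) a) (act (zpow mul inv one g n) a) /\
       d (act (zpow mul inv one g m) a) (act (zpow mul inv one g n) a) <=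
         theta * Rabs (IZR (m - n))) /\
  (forall o : X, Rbar_lt (Finite 0) (asym_transl mul one act d g o)).
Proof.
  destruct lower as [c [Hc HL]].
  destruct upper as [C [HC HU]].
  split.
  - exists (Rmax 1 (Rmax C (/ c))). split. apply Rmax_l.
    set (th := Rmax 1 (Rmax C (/ c))).
    assert (H1 : 1 <= th) by apply Rmax_l.
    assert (H2 : C <= th) by (eapply Rle_trans; [apply Rmax_l|apply Rmax_r]).
    assert (H3 : / c <= th) by (eapply Rle_trans; [apply Rmax_r|apply Rmax_r]).
    assert (H4 : / th <= c).
    { rewrite <- (Rinv_inv c). apply Rinv_le_contravar; auto. apply Rinv_0_lt_compat; auto. }
    intros a Ha m n.
    rewrite dshift.
    replace (Rabs (IZR (m - n))) with (IZR (Z.abs (n - m)))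
      by (rewrite <- abs_IZR; f_equal; lia).
    assert (0 <= IZR (Z.abs (n - m))) by (apply IZR_le; lia).
    split.
    + eapply Rle_trans; [|apply (HL a Ha)]. apply Rmult_le_compat_r; auto.
    + eapply Rle_trans; [apply (HU a Ha)|]. rewrite (Rmult_comm th). apply Rmult_le_compat_l; auto.
  - intros o.
    destruct HQ as [Hinf [[a0 Ha0] _]].
    set (e := d o a0).
    assert (He : 0 <= e) by apply dpos.
    destruct (INR_archimed (c / 2) (2 * e)) as [M HM']. lra.
    apply Rbar_lt_le_trans with (Finite (c / 2)). simpl. lra.
    rewrite <- (LimSup_seq_const (c / 2)).
    apply LimSup_le. exists (S M). intros m Hm.
    unfold asym_transl. rewrite <- (zp_nat G mul inv one g m).
    assert (Hm0 : 0 < INR m) by (apply lt_0_INR; lia).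
    assert (HMm : INR M <= INR m) by (apply le_INR; lia).
    assert (Hlow : c * INR m - 2 * e <= d o (act (zp (Z.of_nat m)) o)).
    { specialize (HL a0 Ha0 (Z.of_nat m)).
      replace (IZR (Z.abs (Z.of_nat m))) with (INR m) in HL
        by (rewrite INR_IZR_INZ; f_equal; lia).
      pose proof (dtri a0 o (act (zp (Z.of_nat m)) a0)).
      pose proof (dtri o (act (zp (Z.of_nat m)) o) (act (zp (Z.of_nat m)) a0)).
      rewrite (act_isom _ _ _ _ HA) in H0. rewrite (dsym a0 o) in H. fold e in H, H0. lra. }
    apply Rmult_le_reg_r with (INR m); auto.
    unfold Rdiv at 2. rewrite Rmult_assoc, (Rinv_l (INR m)) by lra. nra.
Qed.

End Main.

Theorem mainTheorem13 (G X : Type) (mul : G -> G -> G) (inv : G -> G) (one : G)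
    (act : G -> X -> X) (d : X -> X -> R) (Gam : path X -> Prop)
    (mu nu eta : R) (g : G) (A : X -> Prop) :
  path_system_group mul inv one act d Gam mu nu ->
  0 <= eta ->
  quasi_convex_element mul inv one act d Gam eta g A ->
  (exists theta : R, 1 <= theta /\
     forall a, A a -> forall m n : Z,
       / theta * Rabs (IZR (m - n)) <=
         d (act (zpow mul inv one g m) a) (act (zpow mul inv one g n) a) /\
       d (act (zpow mul inv one g m) a) (act (zpow mul inv one g n) a) <=
         theta * Rabs (IZR (m - n))) /\
  (forall o : X, Rbar_lt (Finite 0) (asym_transl mul one act d g o)).
Proof.
  intros H1 H2 H3. exact (conclusion G X mul inv one act d Gam mu nu eta g A H1 H2 H3).
Qed.
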